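(* For every integer $n\ge 1$, \[ \sum_{k=0}^{n}\Big(-\frac{1}{4}\Big)^k\binom{n}{k}\binom{1+2k}{k}\,k\,H_{1+2k} =\frac{3n}{2^{1+2n}(1-4n^2)}\binom{1+2n}{n}\Big\{3H_n-4H_{1+2n}-\frac{16n}{1-4n^2}-\frac{2-14n}{3n}\Big\}+\frac{1}{1+n}. \]
   Context: For an integer $m\ge 0$, $H_m$ denotes the $m$-th harmonic number: $H_0=0$ and $H_m=\sum_{j=1}^m \frac1j$ for $m\ge1$. $\binom{n}{k}$ is the usual binomial coefficient. *)

(* Defs.v *)
From HB Require Import structures.
From mathcomp Require Import all_boot all_order all_algebra.
Set Implicit Arguments. Unset Strict Implicit. Unset Printing Implicit Defensive.
Import Order.TTheory GRing.Theory Num.Theory.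
Local Open Scope ring_scope.

Definition harm (m : nat) : rat := \sum_(1 <= j < m.+1) (j%:R)^-1.

(* Main.v *)
Require Import Defs.
From HB Require Import structures.
From mathcomp Require Import all_boot all_order all_algebra.
From mathcomp Require Import ring lra zify.
Import Order.TTheory GRing.Theory Num.Theory.
Local Open Scope ring_scope.

Ltac nzs := repeat (apply/andP; split); first [assumption | apply/lt0r_neq0; lra | by rewrite expf_neq0 | apply/lt0r_neq0; nra | apply/ltr0_neq0; nra].

Lemma binup (n m : nat) :
  ('C(n.+1, m))%:R * (n%:R + 1 - m%:R) = (n%:R + 1) * ('C(n, m))%:R :> rat.
Proof.
case: (leqP m n.+1) => hm.
  have := congr1 (fun x => x%:R : rat) (mul_bin_down n.+1 m).
  rewrite /= !natrM natrB // -natr1 => ->; ring.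
by rewrite !bin_small ?mul0r ?mulr0 //; apply: ltnW.
Qed.

Lemma bindown (n m : nat) :
  ('C(n, m.+1))%:R * (m%:R + 1) = ('C(n, m))%:R * (n%:R - m%:R) :> rat.
Proof.
case: (leqP m n) => hm.
  have := congr1 (fun x => x%:R : rat) (mul_bin_left n m).
  rewrite /= !natrM natrB // -natr1 => E; rewrite mulrC E; ring.
by rewrite !bin_small ?mul0r //; apply: ltnW.
Qed.

Lemma eq_via (a b c d : rat) : a = b -> c - d = a - b -> c = d.
Proof. by move=> -> /eqP; rewrite subrr subr_eq0 => /eqP. Qed.
Arguments eq_via {a b c d}.
Lemma eq_viaM (a b c d : rat) (m : rat) : a = b -> c - d = (a - b) * m -> c = d.
Proof. by move=> -> /eqP; rewrite subrr mul0r subr_eq0 => /eqP. Qed.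
Arguments eq_viaM {a b c d}.

Lemma C21 (k : nat) :
  ('C(1 + 2 * k, k))%:R * (k%:R + 1) = (2 * k%:R + 1) * ('C(2 * k, k))%:R :> rat.
Proof.
have := binup (2 * k) k; rewrite add1n natrM => E.
by apply: (eq_via E); ring.
Qed.

Lemma C2S (k : nat) :
  ('C(2 * k.+1, k.+1))%:R * (k%:R + 1) = 2 * (2 * k%:R + 1) * ('C(2 * k, k))%:R :> rat.
Proof.
have E1 := binup (2 * k).+1 k.+1.
have E2 := bindown (2 * k).+1 k.
have E3 := C21 k.
have -> : (2 * k.+1 = (2 * k).+2)%N by rewrite mulnS add2n.
move: E1 E2 E3; rewrite add1n -[((2*k).+1)%:R]natr1 -[(k.+1)%:R]natr1 !natrM => E1 E2 E3.
have hk : (k%:R + 1 : rat) != 0 by apply: lt0r_neq0; have := ler0n rat k; lra.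
have Eb : ('C((2 * k).+1, k.+1))%:R = ('C((2 * k).+1, k))%:R :> rat.
  apply: (mulIf hk); rewrite E2; ring.
rewrite Eb in E1.
apply: (mulIf hk).
have -> : (2 * (2 * k%:R + 1) * ('C(2 * k, k))%:R * (k%:R + 1) : rat)
   = 2 * (k%:R + 1) * ((2 * k%:R + 1) * ('C(2 * k, k))%:R) by ring.
rewrite -E3.
apply: (eq_viaM (k%:R + 1) E1); ring.
Qed.

Lemma C2S1 (k : nat) :
  ('C(1 + 2 * k.+1, k.+1))%:R * (k%:R + 2) = (2 * k%:R + 3) * ('C(2 * k.+1, k.+1))%:R :> rat.
Proof.
have E := binup (2 * k.+1) k.+1; rewrite add1n.
by apply: (eq_via E); rewrite -natr1 !natrM -natr1; ring.
Qed.

Definition q : rat := - (1 / 4).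
Definition T (m j : nat) : rat := q ^+ j * ('C(m, j))%:R * ('C(2 * j, j))%:R.

Lemma T_term (m j : nat) :
  (2 * m%:R + 1) * (m%:R + 1) / 2 * T m j - (m%:R + 1) ^+ 2 * T m.+1 j
  = T m.+1 j.+1 * (j%:R + 1) ^+ 2 - T m.+1 j * j%:R ^+ 2.
Proof.
have hm := ler0n rat m; have hj := ler0n rat j.
have e1 : ('C(m, j))%:R = ('C(m.+1, j))%:R * (m%:R + 1 - j%:R) / (m%:R + 1) :> rat.
  by rewrite binup; field; apply/lt0r_neq0; lra.
have e2 : ('C(m.+1, j.+1))%:R = ('C(m.+1, j))%:R * (m%:R + 1 - j%:R) / (j%:R + 1) :> rat.
  by rewrite [m%:R + 1]natr1 -bindown; field; apply/lt0r_neq0; lra.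
have e3 : ('C(2 * j.+1, j.+1))%:R = 2 * (2 * j%:R + 1) * ('C(2 * j, j))%:R / (j%:R + 1) :> rat.
  by rewrite -C2S; field; apply/lt0r_neq0; lra.
rewrite /T e1 e2 e3 [q ^+ j.+1]exprS /q.
by field; nzs.
Qed.

Definition B (m : nat) : rat := \sum_(0 <= j < m.+1) T m j.

Lemma T_out (m : nat) : T m m.+1 = 0.
Proof. by rewrite /T bin_small // mulr0 mul0r. Qed.

Lemma Brec (m : nat) : B m.+1 * (m%:R + 1) = (2 * m%:R + 1) / 2 * B m.
Proof.
have hm := ler0n rat m.
have H : \sum_(0 <= j < m.+2)
    ((2 * m%:R + 1) * (m%:R + 1) / 2 * T m j - (m%:R + 1) ^+ 2 * T m.+1 j) = 0.
  rewrite (eq_bigr (fun j => T m.+1 j.+1 * (j.+1)%:R ^+ 2 - T m.+1 j * j%:R ^+ 2)); last first.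
    by move=> j _; rewrite T_term -natr1.
  rewrite telescope_sumr // T_out expr0n /= mulr0; ring.
move: H; rewrite sumrB -!mulr_sumr big_nat_recr //= T_out addr0 -/(B m) -/(B m.+1) => H.
have hm1 : (m%:R + 1 : rat) != 0 by apply/lt0r_neq0; lra.
apply: (mulIf hm1).
apply: (eq_viaM (-1) H); ring.
Qed.

Lemma Bclosed (m : nat) : B m.+1 = ('C(1 + 2 * m, m))%:R / 2 ^+ (1 + 2 * m).
Proof.
elim: m => [|m IH].
  rewrite /B big_nat_recr //= big_nat_recr //= big_geq // /T /q.
have hm := ler0n rat m.
have R := Brec m.+1.
have e1 := C2S1 m; have e2 := C2S m; have e3 := C21 m.
have ep : (2 : rat) ^+ (1 + 2 * m.+1) = 2 ^+ (1 + 2 * m) * 4.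
  by rewrite (_ : (1 + 2 * m.+1 = (1 + 2 * m) + 2)%N) ?exprD //; lia.
have hm1 : ((m.+1)%:R + 1 : rat) != 0 by rewrite natr1 pnatr_eq0.
have hm2 : (m%:R + 1 : rat) != 0 by apply/lt0r_neq0; lra.
have hc : ('C(1 + 2 * m.+1, m.+1))%:R = 2 * (2 * m%:R + 3) / (m%:R + 2) * ('C(1 + 2 * m, m))%:R :> rat.
  have E : ('C(2 * m.+1, m.+1))%:R = 2 * ('C(1 + 2 * m, m))%:R :> rat.
    apply: (mulIf hm2); rewrite e2; apply: (eq_viaM (-2) e3); ring.
  have hm3 : (m%:R + 2 : rat) != 0 by apply/lt0r_neq0; lra.
  apply: (mulIf hm3); rewrite e1 E; field; nzs.
apply: (mulIf hm1); rewrite R IH hc ep -natr1; field; nzs.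
Qed.

Lemma L_term (m j : nat) :
  let R' := fun j : nat => 26 - 36 * m%:R + 8 * (2 * m%:R - 1) * j%:R in
  T m j.+1 * (j.+1)%:R ^+ 2 * R' j.+1 - T m j * j%:R ^+ 2 * R' j
  = T m j * ((3 - 2 * m%:R) * (2 * m%:R - 1) * (4 * j%:R ^+ 2 - 3 * j%:R - 1)
             + (6 * m%:R ^+ 2 - m%:R - 3)).
Proof.
move=> R'; rewrite /R'.
have hm := ler0n rat m; have hj := ler0n rat j.
have e2 : ('C(m, j.+1))%:R = ('C(m, j))%:R * (m%:R - j%:R) / (j%:R + 1) :> rat.
  by rewrite -bindown; field; nzs.
have e3 : ('C(2 * j.+1, j.+1))%:R = 2 * (2 * j%:R + 1) * ('C(2 * j, j))%:R / (j%:R + 1) :> rat.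
  by rewrite -C2S; field; nzs.
rewrite /T e2 e3 [q ^+ j.+1]exprS /q -natr1.
by field; nzs.
Qed.

Definition Lf (m : nat) : rat :=
  \sum_(0 <= j < m.+1) T m j * (4 * j%:R ^+ 2 - 3 * j%:R - 1).

Lemma Lclosed (m : nat) :
  (3 - 2 * m%:R) * (2 * m%:R - 1) * Lf m = - (6 * m%:R ^+ 2 - m%:R - 3) * B m.
Proof.
pose R' := fun j : nat => (26 : rat) - 36 * m%:R + 8 * (2 * m%:R - 1) * j%:R.
have H := telescope_sumr (fun j => T m j * j%:R ^+ 2 * R' j) (leq0n m.+1).
move: H; rewrite T_out expr0n /= mulr0 mul0r subr0 mul0r.
rewrite (eq_bigr _ (fun j _ => L_term m j)).
have E : \sum_(0 <= i < m.+1) T m i *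
     ((3 - 2 * m%:R) * (2 * m%:R - 1) * (4 * i%:R ^+ 2 - 3 * i%:R - 1) +
      (6 * m%:R ^+ 2 - m%:R - 3)) = (3 - 2 * m%:R) * (2 * m%:R - 1) * Lf m
             + (6 * m%:R ^+ 2 - m%:R - 3) * B m.
  rewrite /Lf /B !mulr_sumr -big_split /=; apply: eq_bigr => i _; move: (T m i) => t; ring.
rewrite E mul0r; move: (Lf m) (B m) => l b H.
by apply: (eq_viaM 1 H); ring.
Qed.

Definition s (n k : nat) : rat :=
  (- (1 / 4 : rat)) ^+ k * ('C(n, k))%:R * ('C(1 + 2 * k, k))%:R * k%:R * harm (1 + 2 * k).
Definition S (n : nat) : rat := \sum_(0 <= k < n.+1) s n k.
Definition g (n k : nat) : rat :=
  q ^+ k * ('C(n.+1, k))%:R * ('C(1 + 2 * k, k))%:R * (k%:R ^+ 3 - k%:R) * harm (1 + 2 * k).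

Lemma harmS (m : nat) : harm m.+1 = harm m + (m.+1)%:R^-1.
Proof. by rewrite /harm big_nat_recr. Qed.

Lemma harmS2 (k : nat) :
  harm (1 + 2 * k.+1) = harm (1 + 2 * k) + 1 / (2 * k%:R + 2) + 1 / (2 * k%:R + 3).
Proof.
have -> : (1 + 2 * k.+1 = (1 + 2 * k).+2)%N by lia.
have hk := ler0n rat k.
rewrite !harmS -!natr1 ?natrD ?natrM; field; nzs.
Qed.

Lemma S_term (n k : nat) :
  (2 * n%:R - 1) * (n%:R + 1) / 2 * s n k - n%:R * (n%:R + 2) * s n.+1 k
  = g n k.+1 - g n k - 1 / 2 * T n.+1 k.+1 * (k%:R * (4 * k%:R + 5)).
Proof.
have hn := ler0n rat n; have hk := ler0n rat k.
have e1 : ('C(n, k))%:R = ('C(n.+1, k))%:R * (n%:R + 1 - k%:R) / (n%:R + 1) :> rat.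
  by rewrite binup; field; nzs.
have e2 : ('C(n.+1, k.+1))%:R = ('C(n.+1, k))%:R * (n%:R + 1 - k%:R) / (k%:R + 1) :> rat.
  by rewrite [n%:R + 1]natr1 -bindown; field; nzs.
have e3 : ('C(2 * k.+1, k.+1))%:R = 2 * (2 * k%:R + 1) * ('C(2 * k, k))%:R / (k%:R + 1) :> rat.
  by rewrite -C2S; field; nzs.
have e4 : ('C(1 + 2 * k.+1, k.+1))%:R = (2 * k%:R + 3) * ('C(2 * k.+1, k.+1))%:R / (k%:R + 2) :> rat.
  by rewrite -C2S1; field; nzs.
have e5 : ('C(1 + 2 * k, k))%:R = (2 * k%:R + 1) * ('C(2 * k, k))%:R / (k%:R + 1) :> rat.
  by rewrite -C21; field; nzs.
rewrite /s /g /T harmS2 e1 e2 e4 e3 e5 [q ^+ k.+1]exprS /q -!natr1.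
move: (harm (1 + 2 * k)) (('C(n.+1, k))%:R : rat) (('C(2 * k, k))%:R : rat) ((- (1/4 : rat)) ^+ k) => h b c x.
by field; nzs.
Qed.

Lemma Srec (n : nat) :
  (2 * n%:R - 1) * (n%:R + 1) / 2 * S n - n%:R * (n%:R + 2) * S n.+1
  = - (1 / 2) * (Lf n.+1 + 1).
Proof.
have H := telescope_sumr (g n) (leq0n n.+2).
have g0 : g n 0 = 0 by rewrite /g expr0n /= subrr mulr0 mul0r.
have gN : g n n.+2 = 0 by rewrite /g bin_small // mulr0 !mul0r.
rewrite g0 gN subrr in H.
have HL : \sum_(0 <= k < n.+2) T n.+1 k.+1 * (k%:R * (4 * k%:R + 5)) = Lf n.+1 + 1.
  rewrite /Lf [in RHS]big_nat_recl // [in LHS]big_nat_recr //= T_out mul0r addr0.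
  have -> : T n.+1 0 = 1 by rewrite /T expr0 bin0 mul1r.
  rewrite expr0n /= mulr0 subr0 sub0r mulrN1 [RHS]addrC addrA subrr add0r.
  apply: eq_bigr => i _.
  by rewrite -natr1; move: (T n.+1 i.+1) => t; ring.
have : \sum_(0 <= k < n.+2)
   ((2 * n%:R - 1) * (n%:R + 1) / 2 * s n k - n%:R * (n%:R + 2) * s n.+1 k) = 
   - (1 / 2) * (Lf n.+1 + 1).
  rewrite (eq_bigr _ (fun k _ => S_term n k)) sumrB H sub0r -HL mulr_sumr -sumrN.
  by apply: eq_bigr => i _; move: (T n.+1 i.+1) => t; ring.
rewrite sumrB -!mulr_sumr big_nat_recr //= [s n n.+1]/s bin_small // mulr0 !mul0r addr0.
by [].
Qed.

Definition Rf (n : nat) : rat :=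
  (3 * n%:R) / ((2 : rat) ^+ (1 + 2 * n) * (1 - 4 * n%:R ^+ 2))
      * ('C(1 + 2 * n, n))%:R
      * (3 * harm n - 4 * harm (1 + 2 * n)
         - (16 * n%:R) / (1 - 4 * n%:R ^+ 2)
         - (2 - 14 * n%:R) / (3 * n%:R))
    + 1 / (1 + n%:R).

Lemma base1 : S 1 = Rf 1.
Proof.
rewrite /S /Rf /s /harm.
by apply/eqP; rewrite !unlock; vm_compute.
Qed.

Lemma Cstep (m : nat) :
  ('C(1 + 2 * m.+1, m.+1))%:R = 2 * (2 * m%:R + 3) / (m%:R + 2) * ('C(1 + 2 * m, m))%:R :> rat.
Proof.
have hm := ler0n rat m.
have e1 := C2S1 m; have e2 := C2S m; have e3 := C21 m.
have hm2 : (m%:R + 1 : rat) != 0 by apply/lt0r_neq0; lra.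
have E : ('C(2 * m.+1, m.+1))%:R = 2 * ('C(1 + 2 * m, m))%:R :> rat.
  apply: (mulIf hm2); rewrite e2; apply: (eq_viaM (-2) e3); ring.
have hm3 : (m%:R + 2 : rat) != 0 by apply/lt0r_neq0; lra.
apply: (mulIf hm3); rewrite e1 E; field; nzs.
Qed.

Lemma pow2S (m : nat) : (2 : rat) ^+ (1 + 2 * m.+1) = 2 ^+ (1 + 2 * m) * 4.
Proof. by rewrite (_ : (1 + 2 * m.+1 = (1 + 2 * m) + 2)%N) ?exprD //; lia. Qed.

Lemma Sclosed (n : nat) : S n.+1 = Rf n.+1.
Proof.
elim: n => [|n IH]; first exact: base1.
have R := Srec n.+1.
have L := Lclosed n.+2.
rewrite Bclosed in L.
have hn := ler0n rat n.
have hp : (2 : rat) ^+ (1 + 2 * n.+1) != 0 by rewrite expf_neq0.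
have ha : ((n.+1)%:R * ((n.+1)%:R + 2) : rat) != 0.
  by rewrite -!natr1; apply/lt0r_neq0; nra.
have hL : (3 - 2 * (n.+2)%:R) * (2 * (n.+2)%:R - 1) != 0 :> rat.
  by rewrite -!natr1; apply/ltr0_neq0; nra.
have eL : Lf n.+2 = - (6 * (n.+2)%:R ^+ 2 - (n.+2)%:R - 3) * 
   (('C(1 + 2 * n.+1, n.+1))%:R / 2 ^+ (1 + 2 * n.+1)) / ((3 - 2 * (n.+2)%:R) * (2 * (n.+2)%:R - 1)).
  apply: (mulIf hL); rewrite mulrC L; field; nzs.
have eS : S n.+2 = ((2 * (n.+1)%:R - 1) * ((n.+1)%:R + 1) / 2 * S n.+1 + (1 / 2) * (Lf n.+2 + 1))
                   / ((n.+1)%:R * ((n.+1)%:R + 2)).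
  apply: (mulIf ha); apply: (eq_viaM (-1) R); field; nzs.
rewrite eS eL IH /Rf (Cstep n.+1) (pow2S n.+1) (harmS2 n.+1) (harmS n.+1).
rewrite -[(n.+2)%:R]natr1 -[(n.+1)%:R]natr1.
have hp' : (2 : rat) ^+ (1 + 2 * n.+1) = 2 ^+ (1 + 2 * n) * 4 by exact: pow2S.
have hq : (2 : rat) ^+ (1 + 2 * n) != 0 by rewrite expf_neq0.
move: hq (harm n.+1) (harm (1 + 2 * n.+1)) (('C(1 + 2 * n.+1, n.+1))%:R : rat).
move: ((2 : rat) ^+ (1 + 2 * n)) => x hx h1 h2 y.
by field; nzs.
Qed.

Theorem theorem11 (n : nat) (hn : (1 <= n)%N) :
  \sum_(0 <= k < n.+1)
     (- (1 / 4 : rat)) ^+ k * ('C(n, k))%:R * ('C(1 + 2 * k, k))%:R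
       * k%:R * harm (1 + 2 * k)
  = (3 * n%:R) / ((2 : rat) ^+ (1 + 2 * n) * (1 - 4 * n%:R ^+ 2))
      * ('C(1 + 2 * n, n))%:R
      * (3 * harm n - 4 * harm (1 + 2 * n)
         - (16 * n%:R) / (1 - 4 * n%:R ^+ 2)
         - (2 - 14 * n%:R) / (3 * n%:R))
    + 1 / (1 + n%:R).
Proof.
case: n hn => [//|n] _.
exact: (Sclosed n).
Qed.
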